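(* Let $y\ge1$ be an integer and $\rho\in(0,1)$. For any probability distribution $G$ supported on $\mathbb{R}_+$, $\theta_G(y;\rho)\ge\rho^2/16$.
   Context: $f_G(y)=\int\frac{\theta^ye^{-\theta}}{y!}G(d\theta)$ for $y\in\{0,1,\dots\}$, $\Delta f_G(y)=f_G(y+1)-f_G(y)$, and $\theta_G(y;\rho)=(y+1)\big(\frac{\Delta f_G(y)}{f_G(y)\vee\rho}+1\big)$. *)

(* Defs.v *)
From HB Require Import structures.
From mathcomp Require Import all_boot all_order all_algebra.
From mathcomp Require Import all_classical all_reals all_analysis.
Set Implicit Arguments. Unset Strict Implicit. Unset Printing Implicit Defensive.
Import Order.TTheory GRing.Theory Num.Theory.
Local Open Scope classical_set_scope.
Local Open Scope ring_scope.

Definition pois_kernel {R : realType} (y : nat) (t : R) : R :=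
  t ^+ y * expR (- t) / (y`!)%:R.

Definition fG {R : realType} (G : probability R R) (y : nat) : R :=
  Rintegral G setT (pois_kernel y).

Definition DfG {R : realType} (G : probability R R) (y : nat) : R :=
  fG G y.+1 - fG G y.

Definition thetaG {R : realType} (G : probability R R) (y : nat) (rho : R) : R :=
  (y.+1)%:R * (DfG G y / Num.max (fG G y) rho + 1).

(* Main.v *)
Require Import Defs.
From HB Require Import structures.
From mathcomp Require Import all_boot all_order all_algebra.
From mathcomp Require Import all_classical all_reals all_analysis.
From mathcomp Require Import measurable_realfun.
From mathcomp Require Import ring lra.
Import Order.TTheory GRing.Theory Num.Theory.
Local Open Scope classical_set_scope.
Local Open Scope ring_scope.

Section S.
Context (R : realType).
Context (G : probability R R).
Context (G0 : G [set t : R | t < 0] = 0%E).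

Let D := [set t : R | 0 <= t].
Lemma mD : measurable D.
Proof.
have -> : D = `[0, +oo[%classic.
  by apply/seteqP; split => x /=; rewrite in_itv /= andbT.
exact: measurable_itv. Qed.

Lemma mpk k : measurable_fun setT (@pois_kernel R k).
Proof.
rewrite /pois_kernel. apply: measurable_realfun.measurable_funM => //.
apply: measurable_realfun.measurable_funM.
  exact: measurable_realfun.measurable_funX.
apply: measurableT_comp => //.
Qed.

Lemma intD k : (\int[G]_x (pois_kernel k x)%:E = \int[G]_(x in D) (pois_kernel k x)%:E)%E.
Proof.
rewrite [RHS]integral_mkcond.
apply: (@ae_eq_integral _ _ _ G setT) => //.
- apply/measurable_EFinP; exact: mpk.
- apply/(measurable_restrictT _ _).1; first exact: mD.
  apply: measurable_funTS; apply: measurableT_comp => //; exact: mpk.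
- exists [set t : R | t < 0]; split => //.
  + have -> : [set t : R | t < 0] = `]-oo, 0[%classic.
      by apply/seteqP; split => x /=; rewrite in_itv /=.
    exact: measurable_itv.
  + move=> x /= H; apply: contra_notP H => /negP; rewrite -leNgt => x0 _.
    by rewrite patchE ifT //; rewrite in_setE.
Qed.

Lemma pk_ge0 k (t : R) : 0 <= t -> 0 <= pois_kernel k t.
Proof.
move=> t0; rewrite /pois_kernel; apply: divr_ge0 => //.
by apply: mulr_ge0; [exact: exprn_ge0|exact: expR_ge0].
Qed.

Lemma pk_le1 k (t : R) : 0 <= t -> pois_kernel k.+1 t <= 1.
Proof.
move=> t0; have := expR_ge1Dxn k t0.
rewrite /pois_kernel expRN => h.
have ep := expR_gt0 t.
rewrite mulrAC ler_pdivrMr // mul1r.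
by apply: le_trans h; rewrite lerDr.
Qed.

Lemma pk_S k (t : R) : (k.+1)%:R * pois_kernel k.+1 t = t * pois_kernel k t.
Proof.
rewrite /pois_kernel factS natrM exprS.
have h1 : (k.+1)%:R != 0 :> R by rewrite pnatr_eq0.
have h2 : (k`!)%:R != 0 :> R by rewrite pnatr_eq0 -lt0n fact_gt0.
by field; rewrite h2 /= addrC natr1 h1.
Qed.

Lemma pk_small k (t : R) : 0 <= t -> t <= 1 -> pois_kernel k.+1 t <= t.
Proof.
move=> t0 t1; rewrite /pois_kernel.
have f1 : 1 <= (k.+1)`!%:R :> R by rewrite ler1n fact_gt0.
have f0 : 0 < (k.+1)`!%:R :> R by apply: lt_le_trans f1.
rewrite ler_pdivrMr //.
have e1 : expR (- t) <= 1 by rewrite expR_le1 oppr_le0.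
have tk : t ^+ k.+1 <= t by rewrite exprS ler_piMr // exprn_ile1.
have : t ^+ k.+1 * expR (- t) <= t * 1.
  apply: ler_pM => //. all: try exact: exprn_ge0. all: try exact: expR_ge0.
move=> h; apply: (le_trans h); rewrite mulr1 ler_peMr //.
Qed.

Lemma pw k (t e : R) : 0 <= t -> 0 < e -> e < 1 ->
  e * pois_kernel k.+1 t <= t * pois_kernel k.+1 t + e ^+ 2.
Proof.
move=> t0 e0 e1; have p0 := pk_ge0 k.+1 t t0.
case: (leP e t) => et.
  apply: ler_wpDr; first exact: sqr_ge0.
  by apply: ler_wpM2r.
have := pk_small k t t0 (ltW (lt_trans et e1)) => h.
have : e * pois_kernel k.+1 t <= e * e.
  by apply: ler_wpM2l; [exact: ltW|exact: le_trans h (ltW et)].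
move=> h2; apply: (le_trans h2); rewrite expr2 lerDr; exact: mulr_ge0.
Qed.


Local Open Scope ereal_scope.
Let F k := \int[G]_(x in D) (pois_kernel k x)%:E.

Lemma mpkE k : measurable_fun D (fun x => (pois_kernel k x)%:E).
Proof. apply: measurable_funTS; apply/measurable_EFinP; exact: mpk. Qed.

Lemma F_ge0 k : 0 <= F k.
Proof. apply: integral_ge0 => x Dx; rewrite lee_fin; exact: pk_ge0. Qed.

Lemma F_le1 k : F k.+1 <= 1.
Proof.
apply: (@le_trans _ _ (\int[G]_(x in D) (cst 1%:E) x)).
  apply: ge0_le_integral => //.
  - exact: mD.
  - by move=> x Dx; rewrite lee_fin; exact: pk_ge0.
  - exact: mpkE.
  - by move=> x Dx; rewrite lee_fin; exact: pk_le1.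
rewrite integral_cst; last exact: mD.
rewrite mul1e; apply: probability_le1; exact: mD.
Qed.

Lemma fGE k : (fG G k.+1)%:E = F k.+1.
Proof.
rewrite /fG /Rintegral intD fineK //.
rewrite ge0_fin_numE; last exact: F_ge0.
by apply: le_lt_trans (F_le1 k) _; exact: ltry.
Qed.

Lemma fG_ge0 k : (0 <= fG G k.+1)%R.
Proof. by rewrite -lee_fin fGE; exact: F_ge0. Qed.

Lemma key k (e : R) : (0 < e)%R -> (e < 1)%R ->
  (e * fG G k.+1 <= (k.+2)%:R * fG G k.+2 + e ^+ 2)%R.
Proof.
move=> e0 e1.
rewrite -lee_fin EFinD !EFinM !fGE.
have p0 j : forall x, D x -> (0 <= (pois_kernel j x)%:E).
  by move=> x Dx; rewrite lee_fin; exact: pk_ge0.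
rewrite /F -(ge0_integralZl_EFin G mD (p0 _) (mpkE k.+1)); last exact: ltW.
rewrite -(ge0_integralZl_EFin G mD (p0 _) (mpkE k.+2)) //.
apply: (@le_trans _ _ (\int[G]_(x in D) ((k.+2)%:R%:E * (pois_kernel k.+2 x)%:E)
   + \int[G]_(x in D) (cst (e ^+ 2)%:E) x)); last first.
  rewrite leeD2l // integral_cst; last exact: mD.
  rewrite -[leRHS]mule1 lee_pmul2l ?lte_fin ?exprn_gt0 //; last exact: probability_le1 mD.
have m2 : measurable_fun D (fun x => (k.+2)%:R%:E * (pois_kernel k.+2 x)%:E).
  apply: measurable_funTS; apply/measurable_EFinP.
  apply: measurable_realfun.measurable_funM => //; exact: mpk.
have q0 : forall x, D x -> 0 <= (k.+2)%:R%:E * (pois_kernel k.+2 x)%:E.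
  by move=> x Dx; rewrite -EFinM lee_fin mulr_ge0 // pk_ge0.
have c0 : forall x, D x -> 0 <= cst (e ^+ 2)%:E x.
  by move=> x Dx; rewrite lee_fin sqr_ge0.
rewrite -(ge0_integralD G mD q0 m2 c0 (measurable_cst _)).
apply: ge0_le_integral => //.
- exact: mD.
- by move=> x Dx; rewrite -EFinM lee_fin mulr_ge0 ?pk_ge0 // ltW.
- apply: measurable_funTS; apply/measurable_EFinP.
  apply: measurable_realfun.measurable_funM => //; exact: mpk.
- apply: measurable_funTS; apply/measurable_EFinP.
  apply: measurable_realfun.measurable_funD => //.
  apply: measurable_realfun.measurable_funM => //; exact: mpk.
move=> x Dx /=; rewrite -EFinM -EFinD lee_fin pk_S.
exact: pw.
Qed.
End S.

Theorem lemma4 (R : realType) (y : nat) (rho : R) (G : probability R R) :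
  (1 <= y)%N -> 0 < rho < 1 ->
  G [set t : R | t < 0] = 0%E ->
  rho ^+ 2 / 16 <= thetaG G y rho.
Proof.
case: y => [//|k] _ /andP[r0 r1] G0.
have hk := @key R G G0 k (rho / 4).
have := hk (ltac:(lra)) (ltac:(lra)) => {hk} hk.
have a0 := @fG_ge0 R G G0 k; have b0 := @fG_ge0 R G G0 k.+1.
rewrite /thetaG /DfG.
set a := fG G k.+1 in hk a0 *; set b := fG G k.+2 in hk b0 *.
have n2 : 2 <= (k.+2)%:R :> R by rewrite ler_nat.
set n := (k.+2)%:R in hk n2 *.
case: (leP rho a) => ra.
  have apos : 0 < a by lra.
  have -> : n * ((b - a) / a + 1) = n * b / a by field; lra.
  rewrite ler_pdivlMr //.
  have h1 : rho * rho <= rho * a by rewrite ler_pM2l.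
  have h2 : rho * rho * a <= rho * a.
    by rewrite -mulrA ler_piMl ?mulr_ge0 //; [exact: ltW|exact: ltW].
  rewrite expr2 in hk *; nra.
have -> : n * ((b - a) / rho + 1) = (n * b + n * (rho - a)) / rho by field; lra.
rewrite ler_pdivlMr //.
nra.
Qed.
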